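(* Let $H \le K \le G$ be finite groups and let $U$ be an irreducible complex representation of $K$ with $U^H \ne 0$. Let $W = \mathrm{Ind}_K^G(U)$ (with $U$ identified with the summand $eU \subseteq W$), and let $V$ be an irreducible $G$-subrepresentation of $W$ (regarded also as a $K$-representation by restriction). Then: (1) $G_{(W^H)} \subseteq K_{(U^H)}$; (2) $V^H \ne 0$ and $K_{(V^H)} \subseteq K_{(U^H)}$; (3) if $K_{(U^H)} = H$, then $G_{(W^H)} = K_{(V^H)} = H$.
   Context: For a group $L$ acting linearly on a space $Y$, a subgroup $M \le L$ and a subspace $X \subseteq Y$: $Y^M = \{y \in Y : my = y \ \forall m \in M\}$ and $L_{(X)} = \{l \in L : lx = x \ \forall x \in X\}$. With $G/K = \{g_1K, \dots, g_sK\}$, $g_1 = e$, the induced representation $\mathrm{Ind}_K^G(U)$ is $\bigoplus_i g_iU$ with action $g\cdot \sum_i g_iu_i = \sum_i g_{\tau(i,g)}(k_{i,g}u_i)$ where $gg_i = g_{\tau(i,g)}k_{i,g}$, $k_{i,g} \in K$. *)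

(* Defs.v *)
From HB Require Import structures.
From mathcomp Require Import all_boot all_order all_algebra all_fingroup all_solvable all_field all_character.
Set Implicit Arguments. Unset Strict Implicit. Unset Printing Implicit Defensive.
Import GRing.Theory.
Local Open Scope ring_scope.

(* Convention: MathComp representations act on row vectors on the right
   (v |-> v *m rG x).  The induced representation is therefore built from a
   right transversal g_0,...,g_(s-1) of K in G (G = disjoint union of K g_i),
   W = (+)_i U (x) g_i, with (u (x) g_i) x = (u k) (x) g_j where g_i x = k g_j.
   Index set of W: pairs (i, p) with i : 'I_s (coset) and p : 'I_n (coordinate
   in U), enumerated through enum_val. *)

Definition ind_dim (s n : nat) := #|{: 'I_s * 'I_n}|.

Definition is_rtransversal (gT : finGroupType) (K G : {set gT}) (s : nat)
    (g : 'I_s -> gT) : Prop :=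
  (forall i, g i \in G) /\
  (forall x, x \in G -> exists! i, x * (g i)^-1 \in K)%g.

Definition ind_mx (gT : finGroupType) (K : {group gT}) (n : nat)
    (rU : mx_representation algC K n) (s : nat) (g : 'I_s -> gT) (x : gT)
    : 'M[algC]_(ind_dim s n) :=
  \matrix_(a, b)
    let ip := enum_val a in let jq := enum_val b in
    let y := (g ip.1 * x * (g jq.1)^-1)%g in
    if y \in K then rU y ip.2 jq.2 else 0.

(* Main.v *)
Require Import Defs.
From HB Require Import structures.
From mathcomp Require Import all_boot all_order all_algebra all_fingroup all_solvable all_field all_character.
Import GRing.Theory.
Local Open Scope ring_scope.

Section Blocks.
Variables (s n : nat).
Local Notation N := (ind_dim s n).

Definition Pj (j : 'I_s) : 'M[algC]_(N, n) :=
  \matrix_(a, p) ((enum_val a == (j, p)) %:R).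

Lemma mulPj m (A : 'M[algC]_(m, N)) j r p :
  (A *m Pj j) r p = A r (enum_rank (j, p)).
Proof.
rewrite !mxE (bigD1 (enum_rank (j, p))) //= !mxE enum_rankK eqxx mulr1.
rewrite big1 ?addr0 // => a ne; rewrite !mxE.
case: eqP => [e|]; last by rewrite mulr0.
by move: ne; rewrite -e enum_valK eqxx.
Qed.

Lemma trPjmul m (A : 'M[algC]_(N, m)) j p b :
  ((Pj j)^T *m A) p b = A (enum_rank (j, p)) b.
Proof.
rewrite !mxE (bigD1 (enum_rank (j, p))) //= !mxE enum_rankK eqxx mul1r.
rewrite big1 ?addr0 // => a ne; rewrite !mxE.
case: eqP => [e|]; last by rewrite mul0r.
by move: ne; rewrite -e enum_valK eqxx.
Qed.

Lemma Pjmul (M : 'M[algC]_n) j a p :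
  (Pj j *m M) a p = if (enum_val a).1 == j then M (enum_val a).2 p else 0.
Proof.
rewrite !mxE; case: eqP => [e|ne].
  rewrite (bigD1 (enum_val a).2) //= !mxE -e -surjective_pairing eqxx mul1r.
  rewrite big1 ?addr0 // => q nq; rewrite !mxE.
  case: eqP => [e2|]; last by rewrite mul0r.
  by move: nq; rewrite e2 eqxx.
rewrite big1 // => q _; rewrite !mxE; case: eqP => [e2|]; last by rewrite mul0r.
by case: ne; rewrite e2.
Qed.

Lemma mulTrPj (M : 'M[algC]_n) j p b :
  (M *m (Pj j)^T) p b = if (enum_val b).1 == j then M p (enum_val b).2 else 0.
Proof.
rewrite !mxE; case: eqP => [e|ne].
  rewrite (bigD1 (enum_val b).2) //= !mxE -e -surjective_pairing eqxx mulr1.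
  rewrite big1 ?addr0 // => q nq; rewrite !mxE.
  case: eqP => [e2|]; last by rewrite mulr0.
  by move: nq; rewrite e2 eqxx.
rewrite big1 // => q _; rewrite !mxE; case: eqP => [e2|]; last by rewrite mulr0.
by case: ne; rewrite e2.
Qed.

End Blocks.
Set Implicit Arguments. Unset Strict Implicit.

Section Main.
Variables (gT : finGroupType) (K G : {group gT}) (sKG : K \subset G)
  (n : nat) (rU : mx_representation algC K n)
  (s : nat) (g : 'I_s -> gT) (i0 : 'I_s)
  (hg : is_rtransversal K G g) (hg0 : g i0 = 1%g)
  (rW : mx_representation algC G (ind_dim s n))
  (hW : forall x, x \in G -> rW x = ind_mx rU g x).

Lemma tr_uniq x i j : x \in G -> (x * (g i)^-1 \in K)%g -> (x * (g j)^-1 \in K)%g -> i = j.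
Proof.
move=> xG xi xj; case: hg => _ /(_ x xG) [i1 [_ u]].
by rewrite -(u i xi) -(u j xj).
Qed.

Lemma gK j : g j \in K -> j = i0.
Proof.
move=> gj; apply: (@tr_uniq 1%g); rewrite ?group1 // ?mul1g ?hg0 ?invg1 ?group1 //.
by rewrite groupV.
Qed.

Lemma gG j : g j \in G.
Proof. by case: hg. Qed.

Lemma EW h : h \in K -> (Pj s n i0)^T *m rW h = rU h *m (Pj s n i0)^T.
Proof.
move=> hK; apply/matrixP=> p b.
rewrite trPjmul mulTrPj hW ?(subsetP sKG) // mxE enum_rankK /= hg0 mul1g.
case: eqP => [e|ne]; first by rewrite e hg0 invg1 mulg1 hK.
case: ifP => // yK; case: ne; apply: gK.
by rewrite -groupV -(groupMl _ hK).
Qed.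

Lemma WP k : k \in K -> rW k *m Pj s n i0 = Pj s n i0 *m rU k.
Proof.
move=> kK; apply/matrixP=> a p.
rewrite mulPj Pjmul hW ?(subsetP sKG) // mxE enum_rankK /= hg0 invg1 mulg1.
case: eqP => [->|ne]; first by rewrite hg0 mul1g kK.
case: ifP => // yK; case: ne; apply: gK.
by rewrite -(groupMr _ kK).
Qed.

Lemma EWP x : x \in G ->
  (Pj s n i0)^T *m rW x *m Pj s n i0 = if x \in K then rU x else 0.
Proof.
move=> xG; apply/matrixP=> p q.
rewrite mulPj trPjmul hW // mxE !enum_rankK /= hg0 invg1 mulg1 mul1g.
by case: ifP => _; rewrite ?mxE.
Qed.

Lemma EP : (Pj s n i0)^T *m Pj s n i0 = 1%:M.
Proof.
apply/matrixP=> p q; rewrite mulPj !mxE enum_rankK xpair_eqE eqxx /=.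
by rewrite eq_sym.
Qed.
Lemma WgP j : rW ((g j)^-1)%g *m Pj s n i0 = Pj s n j.
Proof.
apply/matrixP=> a p.
rewrite mulPj hW ?groupV ?gG // mxE enum_rankK /= hg0 invg1 mulg1 mxE.
case: (enum_val a) => i q /=; rewrite xpair_eqE.
case: eqP => [->|ne]; first by rewrite mulgV group1 repr_mx1 mxE.
case: ifP => // yK; case: ne; apply: (@tr_uniq (g i)) => //.
  exact: gG.
by rewrite mulgV group1.
Qed.


Lemma VP_nz (V : 'M_(ind_dim s n)) : mxmodule rW V -> V != 0 -> V *m Pj s n i0 != 0.
Proof.
move=> modV; apply: contraNneq => VP0; apply/eqP/matrixP => r a; rewrite mxE.
have -> : V r a = (V *m Pj s n (enum_val a).1) r (enum_val a).2.
  by rewrite mulPj -surjective_pairing enum_valK.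
rewrite -WgP mulmxA.
have /submxP [D ->] : (V *m rW ((g (enum_val a).1)^-1)%g <= V)%MS.
  by apply: (mxmoduleP modV); rewrite groupV gG.
by rewrite -mulmxA VP0 mulmx0 mxE.
Qed.

Lemma average (H : {group gT}) (sHK : H \subset K) (V : 'M_(ind_dim s n))
  (modV : mxmodule rW V) (u : 'rV_n) :
  (u <= rfix_mx rU H)%MS -> (u <= V *m Pj s n i0)%MS ->
  exists v : 'rV_(ind_dim s n), (v <= V :&: rfix_mx rW H)%MS /\
     v *m Pj s n i0 = #|H|%:R *: u.
Proof.
have sHG : H \subset G := subset_trans sHK sKG.
move=> uH /submxP [d du]; set v0 := d *m V.
exists (\sum_(h in H) v0 *m rW h); split.
  rewrite sub_capmx; apply/andP; split.
    apply: summx_sub => h hH; apply: submx_trans (mxmoduleP modV h _).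
      by apply: submxMr; apply: submxMl.
    exact: (subsetP sHG).
  apply/rfix_mxP => x xH; rewrite mulmx_suml.
  have xG := subsetP sHG x xH.
  rewrite (eq_bigr (fun h => v0 *m rW (h * x)%g)); last first.
    by move=> h hH; rewrite repr_mxM ?mulmxA // (subsetP sHG).
  rewrite (reindex_inj (mulIg x^-1)%g) /=.
  apply: eq_big => [h|h _]; first by rewrite groupMr ?groupV.
  by rewrite mulgKV.
rewrite mulmx_suml (eq_bigr (fun _ => u)) ?sumr_const ?scaler_nat //.
move=> h hH; rewrite -mulmxA WP ?(subsetP sHK) // mulmxA -/v0.
by rewrite /v0 -(mulmxA d V) -du (rfix_mxP H uH).
Qed.

End Main.
Unset Implicit Arguments. Set Strict Implicit.
Theorem lemma3p8 (gT : finGroupType) (H K G : {group gT})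
  (sHK : H \subset K) (sKG : K \subset G)
  (n : nat) (rU : mx_representation algC K n)
  (irrU : mx_irreducible rU) (UH_nz : rfix_mx rU H != 0)
  (s : nat) (g : 'I_s -> gT) (i0 : 'I_s)
  (hg : is_rtransversal K G g) (hg0 : g i0 = 1%g)
  (rW : mx_representation algC G (ind_dim s n))
  (hW : forall x, x \in G -> rW x = ind_mx rU g x)
  (V : 'M[algC]_(ind_dim s n)) (simV : mxsimple rW V) :
  [/\ rstab rW (rfix_mx rW H) \subset rstab rU (rfix_mx rU H),
      (V :&: rfix_mx rW H)%MS != 0
      /\ K :&: rstab rW (V :&: rfix_mx rW H)%MS \subset rstab rU (rfix_mx rU H)
    & rstab rU (rfix_mx rU H) = H ->
        rstab rW (rfix_mx rW H) = H
        /\ K :&: rstab rW (V :&: rfix_mx rW H)%MS = H].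
Proof.
have sHG : H \subset G := subset_trans sHK sKG.
set P := Pj s n i0.
have EW' := EW sKG hg hg0 hW. have WP' := WP sKG hg hg0 hW.
have EWP' := EWP hg0 hW.
have stabM : forall m1 m2 (A : 'M_(m1, _)) (B : 'M_(m2, _)) x,
    (A <= B)%MS -> B *m rW x = B -> A *m rW x = A.
  by move=> m1 m2 A B x /submxP [D ->] fx; rewrite -mulmxA fx.
have part1 : rstab rW (rfix_mx rW H) \subset rstab rU (rfix_mx rU H).
  apply/subsetP => x; rewrite inE => /andP [xG /eqP fx].
  have Eu (u : 'rV_n) : (u <= rfix_mx rU H)%MS -> (u *m P^T <= rfix_mx rW H)%MS.
    move=> uH; apply/rfix_mxP => h hH.
    by rewrite -mulmxA EW' ?(subsetP sHK) // mulmxA (rfix_mxP H uH).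
  have key (u : 'rV_n) : (u <= rfix_mx rU H)%MS -> u *m (if x \in K then rU x else 0) = u.
    move=> uH; rewrite -EWP' // !mulmxA (stabM _ _ _ _ _ (Eu u uH) fx).
    by rewrite -mulmxA EP // mulmx1.
  have xK : x \in K.
    apply: contraR UH_nz => xK; rewrite -nz_row_eq0.
    by have := key _ (nz_row_sub (rfix_mx rU H)); rewrite (negPf xK) mulmx0 => <-.
  rewrite inE xK /=; apply/eqP/row_matrixP => i; rewrite row_mul.
  by have := key _ (row_sub i (rfix_mx rU H)); rewrite xK.
case: simV => modV V_nz _.
have VPfull (u : 'rV_n) : (u <= V *m P)%MS.
  have [_ irr] := (mx_irrP rU).1 irrU.
  have : row_full <<V *m P>>%MS.
    apply: irr; last by rewrite -mxrank_eq0 genmxE mxrank_eq0 (VP_nz hg hg0 hW).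
    rewrite (eqmx_module _ (genmxE _)); apply/mxmoduleP => k kK.
    rewrite -mulmxA -WP' // mulmxA submxMr //.
    by apply: (mxmoduleP modV); apply: (subsetP sKG).
  by rewrite -sub1mx genmxE => /(submx_trans (submx1 u)).
have Hnz : (#|H|%:R : algC) != 0 by rewrite Num.Theory.pnatr_eq0 -lt0n cardG_gt0.
have part2a : (V :&: rfix_mx rW H)%MS != 0.
  apply: contraNneq UH_nz => c0; rewrite -nz_row_eq0.
  have [v [vc vP]] := average sKG hg hg0 hW sHK modV (nz_row_sub _) (VPfull _).
  move: vc; rewrite c0 submx0 => /eqP v0.
  by move: vP; rewrite v0 mul0mx => /esym/eqP; rewrite scaler_eq0 (negPf Hnz).
have part2b : K :&: rstab rW (V :&: rfix_mx rW H)%MS \subset rstab rU (rfix_mx rU H).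
  apply/subsetP => x; rewrite !inE => /andP [xK /andP [xG /eqP fx]].
  rewrite xK; apply/eqP/row_matrixP => i; rewrite row_mul.
  have [v [vc vP]] := average sKG hg hg0 hW sHK modV (row_sub i _) (VPfull _).
  apply: (scalerI Hnz); rewrite scalemxAl -vP -mulmxA -WP' // mulmxA.
  by rewrite (stabM _ _ _ _ _ vc fx).
split => // eqH.
have Hin : forall m (A : 'M_(m, _)), (A <= rfix_mx rW H)%MS -> H \subset rstab rW A.
  move=> m A AH; apply/subsetP => h hH; rewrite inE (subsetP sHG) //=.
  by apply/eqP; apply: (rfix_mxP H AH).
split; apply/eqP; rewrite eqEsubset.
  by rewrite Hin // andbT; apply: subset_trans part1 _; rewrite eqH.
apply/andP; split; first by apply: subset_trans part2b _; rewrite eqH.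
by rewrite subsetI sHK Hin ?capmxSr.
Qed.
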